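(* Let $(H,B_1,B_2)$ be a Rota-Baxter system of Hopf algebras with descendent operation $\circ$ and cocycle $\sigma$. Then $(H,\cdot,\circ)$ is a Hopf truss with cocycle $\sigma$.
   Context: $\mathbb{F}$ is a field of characteristic $0$; Sweedler notation $\Delta(a)=a_1\otimes a_2$. A Rota-Baxter system of Hopf algebras is a triple $(H,B_1,B_2)$ where $(H,\cdot,1,\Delta,\epsilon,S)$ is a cocommutative Hopf algebra and $B_1,B_2:H\to H$ are coalgebra homomorphisms with $B_1(1)=B_2(1)=1$ such that for all $a,b\in H$: $B_1(a)B_1(b)=B_1(B_1(a_1)bS(B_2(a_2)))$ and $B_2(a)B_2(b)=B_2(B_1(a_1)bS(B_2(a_2)))$. Its descendent operation is $a\circ b=B_1(a_1)bS(B_2(a_2))$ and cocycle $\sigma(a)=B_1(a_1)S(B_2(a_2))$. Given a Hopf algebra $(H,\cdot,1,\Delta,\epsilon,S)$ and a binary operation $\circ$ on $H$ making $(H,\circ,\Delta,\epsilon)$ a (not necessarily unital) bialgebra (i.e. $\circ$ is associative and $\Delta,\epsilon$ are multiplicative for $\circ$), $(H,\cdot,\circ)$ is a Hopf truss with cocycle $\sigma$ if $\sigma:H\to H$ is a coalgebra homomorphism and $a\circ(bc)=(a_1\circ b)S(\sigma(a_2))(a_3\circ c)$ for all $a,b,c\in H$. *)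

(* Defs.v *)
From HB Require Import structures.
From mathcomp Require Import all_boot all_order all_algebra.
Set Implicit Arguments. Unset Strict Implicit. Unset Printing Implicit Defensive.
Import Order.TTheory GRing.Theory Num.Theory.
Local Open Scope ring_scope.

(* MathComp has no tensor product of abstract
   vector spaces, so an element  sum_i x_i (x) y_i  of H (x) H is represented
   by a finite list of pairs [:: (x_i, y_i)], and two such lists denote the
   same tensor iff every bilinear map into every F-vector space takes the same
   value on them (this is exactly equality in H (x) H, by the universal
   property).  Likewise for H (x) H (x) H with trilinear maps.
   The coproduct  Delta a = a_1 (x) a_2  is a function  delta : H -> seq (H*H)
   and Sweedler sums  f(a_1, a_2)  are  \sum_(p <- delta a) f p.1 p.2. *)

Section HopfDefs.
Variables (F : fieldType) (H : algType F).

Definition islin (W : lmodType F) (g : H -> W) : Prop :=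
  forall (k : F) (u v : H), g (k *: u + v) = k *: g u + g v.

Definition bilin (W : lmodType F) (f : H -> H -> W) : Prop :=
  (forall y, islin (fun x => f x y)) /\ (forall x, islin (f x)).

Definition trilin (W : lmodType F) (f : H -> H -> H -> W) : Prop :=
  (forall y z, islin (fun x => f x y z)) /\ (forall x z, islin (fun y => f x y z))
  /\ (forall x y, islin (f x y)).

Definition teq2 (s t : seq (H * H)) : Prop :=
  forall (W : lmodType F) (f : H -> H -> W), bilin f ->
    \sum_(p <- s) f p.1 p.2 = \sum_(p <- t) f p.1 p.2.

Definition teq3 (s t : seq (H * H * H)) : Prop :=
  forall (W : lmodType F) (f : H -> H -> H -> W), trilin f ->
    \sum_(p <- s) f p.1.1 p.1.2 p.2 = \sum_(p <- t) f p.1.1 p.1.2 p.2.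

Definition eps_lin (eps : H -> F) : Prop :=
  forall (k : F) (u v : H), eps (k *: u + v) = k * eps u + eps v.

Definition delta3l (delta : H -> seq (H * H)) (a : H) : seq (H * H * H) :=
  flatten [seq [seq (q.1, q.2, p.2) | q <- delta p.1] | p <- delta a].
Definition delta3r (delta : H -> seq (H * H)) (a : H) : seq (H * H * H) :=
  flatten [seq [seq (p.1, q.1, q.2) | q <- delta p.2] | p <- delta a].

Record is_hopf (delta : H -> seq (H * H)) (eps : H -> F) (S : H -> H) : Prop := {
  hopf_delta_lin : forall (k : F) (a b : H),
    teq2 (delta (k *: a + b)) ([seq (k *: p.1, p.2) | p <- delta a] ++ delta b);
  hopf_eps_lin : eps_lin eps;
  hopf_coassoc : forall a, teq3 (delta3l delta a) (delta3r delta a);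
  hopf_counitl : forall a, \sum_(p <- delta a) eps p.1 *: p.2 = a;
  hopf_counitr : forall a, \sum_(p <- delta a) eps p.2 *: p.1 = a;
  hopf_delta_mul : forall a b,
    teq2 (delta (a * b)) [seq (p.1 * q.1, p.2 * q.2) | p <- delta a, q <- delta b];
  hopf_delta_one : teq2 (delta 1) [:: (1, 1)];
  hopf_eps_mul : forall a b, eps (a * b) = eps a * eps b;
  hopf_eps_one : eps 1 = 1;
  hopf_S_lin : islin S;
  hopf_antipodel : forall a, \sum_(p <- delta a) S p.1 * p.2 = eps a *: 1;
  hopf_antipoder : forall a, \sum_(p <- delta a) p.1 * S p.2 = eps a *: 1
}.

Definition cocommutative (delta : H -> seq (H * H)) : Prop :=
  forall a, teq2 (delta a) [seq (p.2, p.1) | p <- delta a].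

Definition coalg_hom (delta : H -> seq (H * H)) (eps : H -> F) (B : H -> H) : Prop :=
  [/\ islin B,
      forall a, teq2 (delta (B a)) [seq (B p.1, B p.2) | p <- delta a]
    & forall a, eps (B a) = eps a].

Definition descendent (delta : H -> seq (H * H)) (S B1 B2 : H -> H) (a b : H) : H :=
  \sum_(p <- delta a) B1 p.1 * b * S (B2 p.2).

Definition rbs_cocycle (delta : H -> seq (H * H)) (S B1 B2 : H -> H) (a : H) : H :=
  \sum_(p <- delta a) B1 p.1 * S (B2 p.2).

Record is_RBsystem (delta : H -> seq (H * H)) (eps : H -> F) (S B1 B2 : H -> H)
  : Prop := {
  rbs_hopf : is_hopf delta eps S;
  rbs_cocomm : cocommutative delta;
  rbs_B1_hom : coalg_hom delta eps B1;
  rbs_B2_hom : coalg_hom delta eps B2;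
  rbs_B1_one : B1 1 = 1;
  rbs_B2_one : B2 1 = 1;
  rbs_B1_eq : forall a b, B1 a * B1 b = B1 (descendent delta S B1 B2 a b);
  rbs_B2_eq : forall a b, B2 a * B2 b = B2 (descendent delta S B1 B2 a b)
}.

Record is_hopf_truss (delta : H -> seq (H * H)) (eps : H -> F) (S : H -> H)
  (circ : H -> H -> H) (sig : H -> H) : Prop := {
  truss_hopf : is_hopf delta eps S;
  (* (H, o, delta, eps) is a (not necessarily unital) bialgebra *)
  truss_circ_bilin : bilin circ;
  truss_circ_assoc : forall a b c, circ a (circ b c) = circ (circ a b) c;
  truss_delta_circ : forall a b,
    teq2 (delta (circ a b)) [seq (circ p.1 q.1, circ p.2 q.2) | p <- delta a, q <- delta b];
  truss_eps_circ : forall a b, eps (circ a b) = eps a * eps b;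
  truss_sig_hom : coalg_hom delta eps sig;
  truss_eq : forall a b c,
    circ a (b * c) = \sum_(p <- delta3l delta a) circ p.1.1 b * S (sig p.1.2) * circ p.2 c
}.

End HopfDefs.

(* Main.v *)
Require Import Defs.
From HB Require Import structures.
From mathcomp Require Import all_boot all_order all_algebra.
Import GRing.Theory.
Local Open Scope ring_scope.
Set Implicit Arguments. Unset Strict Implicit.

Section Lin.
Variables (F : fieldType) (H : algType F).

Lemma islin0 (W : lmodType F) (f : H -> W) : islin f -> f 0 = 0.
Proof.
move=> hf; have := hf 1 0 0; rewrite !scale1r addr0.
by rewrite -{1}[f 0]addr0 => /addrI <-.
Qed.

Lemma islinD (W : lmodType F) (f : H -> W) u v : islin f -> f (u + v) = f u + f v.
Proof. by move=> hf; rewrite -{1}[u]scale1r hf scale1r. Qed.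

Lemma islinZ (W : lmodType F) (f : H -> W) k u : islin f -> f (k *: u) = k *: f u.
Proof. by move=> hf; rewrite -[k *: u]addr0 hf islin0 // addr0. Qed.

Lemma islin_sum (W : lmodType F) (f : H -> W) I (s : seq I) (P : pred I) (G : I -> H) :
  islin f -> f (\sum_(i <- s | P i) G i) = \sum_(i <- s | P i) f (G i).
Proof.
move=> hf; apply: (big_morph f) => [u v|]; first exact: islinD.
exact: islin0.
Qed.

Lemma islin_id : islin (fun x : H => x). Proof. by []. Qed.

Lemma islin_comp (W : lmodType F) (L : H -> W) (f : H -> H) :
  islin L -> islin f -> islin (fun x => L (f x)).
Proof. by move=> hL hf k u v; rewrite hf hL. Qed.

Lemma islin_mulr (f : H -> H) (c : H) : islin f -> islin (fun x => f x * c).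
Proof. by move=> hf k u v; rewrite hf mulrDl scalerAl. Qed.

Lemma islin_mull (c : H) (f : H -> H) : islin f -> islin (fun x => c * f x).
Proof. by move=> hf k u v; rewrite hf mulrDr scalerAr. Qed.

Lemma islin_scal (W : lmodType F) (k : F) (f : H -> W) : islin f -> islin (fun x => k *: f x).
Proof. by move=> hf k' u v; rewrite hf scalerDr !scalerA mulrC. Qed.

Lemma islin_add (W : lmodType F) (f g : H -> W) :
  islin f -> islin g -> islin (fun x => f x + g x).
Proof. by move=> hf hg k u v; rewrite hf hg scalerDr addrACA. Qed.

Lemma islin_sumf (W : lmodType F) I (s : seq I) (G : I -> H -> W) :
  (forall i, islin (G i)) -> islin (fun x => \sum_(i <- s) G i x).
Proof.
move=> hG k u v; rewrite scaler_sumr -big_split; apply: eq_bigr => i _.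
exact: hG.
Qed.

Lemma islin_f1 (W : lmodType F) (f : H -> H -> W) (g : H -> H) c :
  (forall y, islin (fun x => f x y)) -> islin g -> islin (fun x => f (g x) c).
Proof. by move=> hf hg k u v; rewrite hg hf. Qed.

Lemma islin_f2 (W : lmodType F) (f : H -> H -> W) (g : H -> H) c :
  (forall x, islin (fun y => f x y)) -> islin g -> islin (fun x => f c (g x)).
Proof. by move=> hf hg k u v; rewrite hg hf. Qed.

Lemma bilinP (W : lmodType F) (f : H -> H -> W) :
  (forall y, islin (fun x => f x y)) -> (forall x, islin (fun y => f x y)) -> bilin f.
Proof. by move=> h1 h2; split. Qed.

Definition ml3 (W : lmodType F) (g : H -> H -> H -> W) :=
  [/\ forall y z, islin (fun x => g x y z), forall x z, islin (fun y => g x y z)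
    & forall x y, islin (fun z => g x y z)].
Definition ml4 (W : lmodType F) (g : H -> H -> H -> H -> W) :=
  [/\ forall y z w, islin (fun x => g x y z w), forall x z w, islin (fun y => g x y z w),
      forall x y w, islin (fun z => g x y z w) & forall x y z, islin (fun w => g x y z w)].
Definition ml5 (W : lmodType F) (g : H -> H -> H -> H -> H -> W) :=
  [/\ forall y z w t, islin (fun x => g x y z w t), forall x z w t, islin (fun y => g x y z w t),
      forall x y w t, islin (fun z => g x y z w t), forall x y z t, islin (fun w => g x y z w t)
    & forall x y z w, islin (fun t => g x y z w t)].

Lemma ml3_trilin (W : lmodType F) (g : H -> H -> H -> W) : ml3 g -> trilin g.
Proof. by case=> h1 h2 h3; split=> //; split. Qed.

End Lin.

Section Sweedler.
Variables (F : fieldType) (H : algType F) (delta : H -> seq (H * H)) (eps : H -> F) (S : H -> H).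
Hypothesis hh : is_hopf delta eps S.

Definition Sw (W : lmodType F) (a : H) (f : H -> H -> W) : W := \sum_(p <- delta a) f p.1 p.2.

Lemma eq_Sw (W : lmodType F) a (f g : H -> H -> W) :
  (forall x y, f x y = g x y) -> Sw a f = Sw a g.
Proof. by move=> e; apply: eq_bigr => p _; apply: e. Qed.

Lemma Sw_swap (W : lmodType F) a b (g : H -> H -> H -> H -> W) :
  Sw a (fun x y => Sw b (fun u v => g x y u v)) = Sw b (fun u v => Sw a (fun x y => g x y u v)).
Proof. exact: exchange_big. Qed.

Lemma Sw_in (W W' : lmodType F) (L : W -> W') a (f : H -> H -> W) :
  (forall k u v, L (k *: u + v) = k *: L u + L v) ->
  L (Sw a f) = Sw a (fun x y => L (f x y)).
Proof.
move=> hL; have L0 : L 0 = 0.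
  have := hL 1 0 0; rewrite !scale1r addr0.
  by rewrite -{1}[L 0]addr0 => /addrI <-.
apply: (big_morph L) => // u v; by rewrite -[u]scale1r hL !scale1r.
Qed.

Lemma Sw_mull a c (f : H -> H -> H) : Sw a (fun x y => c * f x y) = c * Sw a f.
Proof. by rewrite /Sw mulr_sumr. Qed.
Lemma Sw_mulr a c (f : H -> H -> H) : Sw a (fun x y => f x y * c) = Sw a f * c.
Proof. by rewrite /Sw mulr_suml. Qed.
Lemma Sw_scale (W : lmodType F) a k (f : H -> H -> W) : Sw a (fun x y => k *: f x y) = k *: Sw a f.
Proof. by rewrite /Sw scaler_sumr. Qed.
Lemma Sw_linf (W : lmodType F) (L : H -> W) a (f : H -> H -> H) :
  islin L -> Sw a (fun x y => L (f x y)) = L (Sw a f).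
Proof. by move=> hL; rewrite /Sw islin_sum. Qed.

Lemma eps_islin : islin (fun x => eps x *: (1 : F^o)).
Proof. move=> k u v /=; rewrite (hopf_eps_lin hh) /GRing.scale /=; by rewrite !mulr1. Qed.

Lemma islin_epsZ (W : lmodType F) (f : H -> H) (c : W) :
  islin f -> islin (fun x => eps (f x) *: c).
Proof. by move=> hf k u v; rewrite hf (hopf_eps_lin hh) scalerDl scalerA. Qed.

Lemma eps_sum I (s : seq I) (G : I -> H) : eps (\sum_(i <- s) G i) = \sum_(i <- s) eps (G i).
Proof.
apply: (big_morph eps) => [u v|].
  by rewrite -[u]scale1r (hopf_eps_lin hh) mul1r scale1r.
have := hopf_eps_lin hh 1 0 0; rewrite !scale1r addr0 mul1r.
by rewrite -{1}[eps 0]addr0 => /addrI <-.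
Qed.

Lemma eps0 : eps 0 = 0.
Proof. by have := eps_sum [::] (fun i : nat => 0); rewrite !big_nil. Qed.

Lemma eps_scale k u : eps (k *: u) = k * eps u.
Proof. by rewrite -[k *: u]addr0 (hopf_eps_lin hh) eps0 addr0. Qed.

Lemma Sw_islin (W : lmodType F) (f : H -> H -> W) : bilin f -> islin (fun a => Sw a f).
Proof.
move=> hf k a b; rewrite /Sw (hopf_delta_lin hh k a b hf); case: hf => h1 h2.
rewrite big_cat big_map /= scaler_sumr; congr (_ + _); apply: eq_bigr => p _.
exact: (islinZ k p.1 (h1 p.2)).
Qed.

Lemma islin_Sw_a (W : lmodType F) (g : H -> H -> W) (f : H -> H) :
  bilin g -> islin f -> islin (fun x => Sw (f x) g).
Proof. move=> hg hf; apply: (islin_comp (L := fun a => Sw a g)) => //; exact: Sw_islin. Qed.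

Lemma islin_Sw_in (W : lmodType F) a (g : H -> H -> H -> W) :
  (forall u v, islin (fun z => g u v z)) -> islin (fun z => Sw a (fun u v => g u v z)).
Proof. move=> hg; apply: islin_sumf => p; exact: hg. Qed.

Lemma coassoc (W : lmodType F) a (g : H -> H -> H -> W) : ml3 g ->
  Sw a (fun x y => Sw x (fun u v => g u v y)) = Sw a (fun x y => Sw y (fun u v => g x u v)).
Proof.
move=> hg; have := hopf_coassoc hh a (ml3_trilin hg).
rewrite /delta3l /delta3r !big_flatten /= !big_map /Sw.
by under eq_bigr do rewrite big_map; under [RHS]eq_bigr do rewrite big_map.
Qed.

Lemma counitL (W : lmodType F) (L : H -> W) a : islin L -> Sw a (fun x y => eps x *: L y) = L a.
Proof.
move=> hL; rewrite -{2}(hopf_counitl hh a) islin_sum //; apply: eq_bigr => p _.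
by rewrite islinZ.
Qed.
Lemma counitR (W : lmodType F) (L : H -> W) a : islin L -> Sw a (fun x y => eps y *: L x) = L a.
Proof.
move=> hL; rewrite -{2}(hopf_counitr hh a) islin_sum //; apply: eq_bigr => p _.
by rewrite islinZ.
Qed.

Lemma antipodeL (W : lmodType F) (L : H -> W) a : islin L -> Sw a (fun x y => L (S x * y)) = eps a *: L 1.
Proof. by move=> hL; rewrite -islinZ // -(hopf_antipodel hh a) islin_sum. Qed.
Lemma antipodeR (W : lmodType F) (L : H -> W) a : islin L -> Sw a (fun x y => L (x * S y)) = eps a *: L 1.
Proof. by move=> hL; rewrite -islinZ // -(hopf_antipoder hh a) islin_sum. Qed.

Lemma Sw_mul (W : lmodType F) a b (f : H -> H -> W) : bilin f ->
  Sw (a * b) f = Sw a (fun x y => Sw b (fun u v => f (x * u) (y * v))).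
Proof. by move=> hf; rewrite /Sw (hopf_delta_mul hh a b hf) big_allpairs_dep. Qed.

Lemma Sw_one (W : lmodType F) (f : H -> H -> W) : bilin f -> Sw 1 f = f 1 1.
Proof. by move=> hf; rewrite /Sw (hopf_delta_one hh hf) big_seq1. Qed.

Lemma Sw_hom (W : lmodType F) (B : H -> H) a (f : H -> H -> W) : coalg_hom delta eps B -> bilin f ->
  Sw (B a) f = Sw a (fun x y => f (B x) (B y)).
Proof. by case=> _ hB _ hf; rewrite /Sw (hB a W f hf) big_map. Qed.


Ltac introsH := repeat match goal with |- forall _, _ => intro end.
Ltac lin :=
  cbv beta;
  first
  [ exact: islin_id
  | apply: islin_add; [lin | lin]
  | apply: islin_mulr; lin
  | apply: islin_mull; lin
  | apply: islin_scal; lin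
  | apply: islin_epsZ; lin
  | apply: islin_Sw_a; [apply: bilinP; introsH; lin | lin]
  | apply: islin_Sw_in => ? ?; lin
  | apply: islin_sumf => ?; lin
  | apply: islin_comp; [ assumption | lin ]
  | apply: islin_f1; [ assumption | lin ]
  | apply: islin_f2; [ assumption | lin ]
  | match goal with h : forall _, _ |- _ => apply: h end ].

Ltac bil := apply: bilinP; introsH; lin.
Ltac ml := split; introsH; lin.

Definition Sw3 (W : lmodType F) a (g : H -> H -> H -> W) :=
  Sw a (fun x y => Sw y (fun u v => g x u v)).
Definition Sw4 (W : lmodType F) a (g : H -> H -> H -> H -> W) :=
  Sw3 a (fun x y z => Sw z (fun u v => g x y u v)).
Definition Sw5 (W : lmodType F) a (g : H -> H -> H -> H -> H -> W) :=
  Sw4 a (fun x y z w => Sw w (fun u v => g x y z u v)).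

Lemma eq_Sw3 (W : lmodType F) a (f g : H -> H -> H -> W) :
  (forall x y z, f x y z = g x y z) -> Sw3 a f = Sw3 a g.
Proof. by move=> e; apply: eq_Sw => x y; apply: eq_Sw => u v; apply: e. Qed.
Lemma eq_Sw4 (W : lmodType F) a (f g : H -> H -> H -> H -> W) :
  (forall x y z w, f x y z w = g x y z w) -> Sw4 a f = Sw4 a g.
Proof. by move=> e; apply: eq_Sw3 => x y z; apply: eq_Sw => u v; apply: e. Qed.
Lemma eq_Sw5 (W : lmodType F) a (f g : H -> H -> H -> H -> H -> W) :
  (forall x y z w t, f x y z w t = g x y z w t) -> Sw5 a f = Sw5 a g.
Proof. by move=> e; apply: eq_Sw4 => x y z w; apply: eq_Sw => u v; apply: e. Qed.

Lemma X21 (W : lmodType F) a (g : H -> H -> H -> W) : ml3 g ->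
  Sw a (fun x y => Sw x (fun u v => g u v y)) = Sw3 a g.
Proof. by move=> hg; rewrite /Sw3 coassoc. Qed.

Lemma X32 (W : lmodType F) a (g : H -> H -> H -> H -> W) : ml4 g ->
  Sw3 a (fun x y z => Sw y (fun u v => g x u v z)) = Sw4 a g.
Proof.
case=> h1 h2 h3 h4; rewrite /Sw4 /Sw3; apply: eq_Sw => x Y.
by apply: (@X21 _ _ (fun u v z => g x u v z)); split; introsH; lin.
Qed.

Lemma X31 (W : lmodType F) a (g : H -> H -> H -> H -> W) : ml4 g ->
  Sw3 a (fun x y z => Sw x (fun u v => g u v y z)) = Sw4 a g.
Proof.
case=> h1 h2 h3 h4; rewrite /Sw4 /Sw3.
transitivity (Sw a (fun X Y => Sw X (fun u v => Sw Y (fun y z => g u v y z)))).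
  by apply: eq_Sw => X Y; apply: Sw_swap.
by apply: (@X21 _ _ (fun u v Y => Sw Y (fun y z => g u v y z))); split; introsH; lin.
Qed.

Lemma X43 (W : lmodType F) a (g : H -> H -> H -> H -> H -> W) : ml5 g ->
  Sw4 a (fun x y z w => Sw z (fun u v => g x y u v w)) = Sw5 a g.
Proof.
case=> h1 h2 h3 h4 h5; rewrite /Sw5 /Sw4; apply: eq_Sw3 => x y Z.
by apply: (@X21 _ _ (fun u v w => g x y u v w)); split; introsH; lin.
Qed.

Lemma X42 (W : lmodType F) a (g : H -> H -> H -> H -> H -> W) : ml5 g ->
  Sw4 a (fun x y z w => Sw y (fun u v => g x u v z w)) = Sw5 a g.
Proof.
case=> h1 h2 h3 h4 h5; rewrite /Sw5 /Sw4.
transitivity (Sw3 a (fun x y Z => Sw y (fun u v => Sw Z (fun z w => g x u v z w)))).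
  by apply: eq_Sw3 => x y Z; apply: Sw_swap.
by apply: (@X32 _ _ (fun x u v Z => Sw Z (fun z w => g x u v z w))); split; introsH; lin.
Qed.

Lemma X41 (W : lmodType F) a (g : H -> H -> H -> H -> H -> W) : ml5 g ->
  Sw4 a (fun x y z w => Sw x (fun u v => g u v y z w)) = Sw5 a g.
Proof.
case=> h1 h2 h3 h4 h5; rewrite /Sw5 /Sw4.
transitivity (Sw3 a (fun x y Z => Sw x (fun u v => Sw Z (fun z w => g u v y z w)))).
  by apply: eq_Sw3 => x y Z; apply: Sw_swap.
by apply: (@X31 _ _ (fun u v y Z => Sw Z (fun z w => g u v y z w))); split; introsH; lin.
Qed.

Lemma Sw3_delta3l (W : lmodType F) a (g : H -> H -> H -> W) :
  \sum_(p <- delta3l delta a) g p.1.1 p.1.2 p.2 = Sw a (fun x y => Sw x (fun u v => g u v y)).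
Proof.
rewrite /delta3l big_flatten /= big_map /Sw; apply: eq_bigr => p _; by rewrite big_map.
Qed.
Let hS : islin S := hopf_S_lin hh.
Let eps1 : eps 1 = 1 := hopf_eps_one hh.
Let epsM : forall a b, eps (a * b) = eps a * eps b := hopf_eps_mul hh.

Lemma eps_S a : eps (S a) = eps a.
Proof.
have : eps (Sw a (fun x y => S x * y)) = eps (eps a *: 1) by rewrite (antipodeL (L := id)).
rewrite eps_sum eps_scale eps1 mulr1 => <-.
rewrite -{1}(hopf_counitr hh a) islin_sum // eps_sum; apply: eq_bigr => p _.
by rewrite islinZ // eps_scale epsM mulrC.
Qed.

Lemma S_mul x y : S (x * y) = S y * S x.
Proof.
have step1 : S (x * y) = Sw x (fun x1 x2 => Sw y (fun y1 y2 => eps (x2 * y2) *: S (x1 * y1))).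
  rewrite -{1}(counitR (L := S) (x * y)) // Sw_mul //; bil.
pose T := Sw x (fun x1 x2 => Sw x2 (fun a1 a2 => Sw y (fun y1 y2 => Sw y2 (fun b1 b2 =>
   S (x1 * y1) * a1 * (b1 * S b2) * S a2)))).
have step2 : S (x * y) = T.
  rewrite step1 /T; apply: eq_Sw => x1 x2.
  transitivity (Sw y (fun y1 y2 => Sw x2 (fun a1 a2 => Sw y2 (fun b1 b2 =>
   S (x1 * y1) * a1 * (b1 * S b2) * S a2)))); last exact: Sw_swap.
  apply: eq_Sw => y1 y2.
  rewrite epsM mulrC -scalerA.
  transitivity (Sw x2 (fun a1 a2 => eps y2 *: (S (x1 * y1) * (a1 * S a2)))).
    rewrite Sw_scale; congr (_ *: _).
    by rewrite (antipodeR (L := fun t => S (x1 * y1) * t)) ?mulr1 //; lin.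
  apply: eq_Sw => a1 a2.
  rewrite (antipodeR (L := fun t => S (x1 * y1) * a1 * t * S a2)); last by lin.
  by rewrite mulr1 mulrA.
pose R x3 y3 := S y3 * S x3.
have step3 : T = Sw x (fun X x3 => Sw y (fun Y y3 => Sw X (fun x1 x2 => Sw Y (fun y1 y2 =>
   S (x1 * y1) * (x2 * y2) * R x3 y3)))).
  rewrite /T.
  transitivity (Sw3 x (fun x1 a1 a2 => Sw3 y (fun y1 b1 b2 => S (x1 * y1) * (a1 * b1) * R a2 b2))).
    apply: eq_Sw => x1 x2; apply: eq_Sw => a1 a2; apply: eq_Sw => y1 y2; apply: eq_Sw => b1 b2.
    by rewrite /R !mulrA.
  rewrite -X21; last by split; introsH; lin.
  apply: eq_Sw => X x3.
  transitivity (Sw X (fun x1 a1 => Sw y (fun Y y3 => Sw Y (fun y1 b1 => S (x1 * y1) * (a1 * b1) * R x3 y3)))).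
    apply: eq_Sw => x1 a1; rewrite -X21 //; split; introsH; lin.
  transitivity (Sw y (fun Y y3 => Sw X (fun x1 a1 => Sw Y (fun y1 b1 => S (x1 * y1) * (a1 * b1) * R x3 y3)))).
    exact: Sw_swap.
  done.
rewrite step2 step3.
transitivity (Sw x (fun X x3 => eps X *: Sw y (fun Y y3 => eps Y *: R x3 y3))).
  apply: eq_Sw => X x3; rewrite -Sw_scale; apply: eq_Sw => Y y3.
  rewrite scalerA -epsM.
  transitivity (Sw (X * Y) (fun p q => S p * q * R x3 y3)).
    by rewrite Sw_mul //; bil.
  by rewrite (antipodeL (L := fun t => t * R x3 y3)) ?mul1r //; lin.
transitivity (Sw x (fun X x3 => eps X *: (S y * S x3))).
  apply: eq_Sw => X x3; congr (_ *: _).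
  by rewrite (counitL (L := fun t => S t * S x3)) //; lin.
by rewrite (counitL (L := fun t => S y * S t)) //; lin.
Qed.

Lemma antipodeL' (W : lmodType F) (L : H -> W) a (g : H -> H -> W) :
  islin L -> (forall x y, g x y = L (S x * y)) -> Sw a g = eps a *: L 1.
Proof. by move=> hL e; rewrite -(antipodeL a hL); apply: eq_Sw. Qed.
Lemma antipodeR' (W : lmodType F) (L : H -> W) a (g : H -> H -> W) :
  islin L -> (forall x y, g x y = L (x * S y)) -> Sw a g = eps a *: L 1.
Proof. by move=> hL e; rewrite -(antipodeR a hL); apply: eq_Sw. Qed.
Lemma counitL' (W : lmodType F) (L : H -> W) a (g : H -> H -> W) :
  islin L -> (forall x y, g x y = eps x *: L y) -> Sw a g = L a.
Proof. by move=> hL e; rewrite -(counitL a hL); apply: eq_Sw. Qed.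
Lemma counitR' (W : lmodType F) (L : H -> W) a (g : H -> H -> W) :
  islin L -> (forall x y, g x y = eps y *: L x) -> Sw a g = L a.
Proof. by move=> hL e; rewrite -(counitR a hL); apply: eq_Sw. Qed.

Lemma Z1 (W : lmodType F) (f : H -> H -> W) : bilin f -> forall s t v,
  Sw v (fun p q => Sw p (fun p1 p2 => Sw q (fun q1 q2 => f (s * p1 * S q2) (t * p2 * S q1))))
  = eps v *: f s t.
Proof.
case=> hf1 hf2 s t v.
rewrite (@X21 _ v (fun p1 p2 q => Sw q (fun q1 q2 => f (s * p1 * S q2) (t * p2 * S q1)))); last first.
  by split; introsH; lin.
rewrite -[Sw3 _ _]/(Sw4 v (fun p1 p2 q1 q2 => f (s * p1 * S q2) (t * p2 * S q1))).
rewrite -X32; last by split; introsH; lin.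
transitivity (Sw3 v (fun p1 w q2 => eps w *: f (s * p1 * S q2) (t * 1))).
  apply: eq_Sw3 => p1 w q2.
  by apply: (antipodeR' (L := fun r => f (s * p1 * S q2) (t * r))); [lin | move=> ? ?; rewrite mulrA].
rewrite /Sw3.
transitivity (Sw v (fun p1 Y => f (s * p1 * S Y) (t * 1))).
  apply: eq_Sw => p1 Y.
  by apply: (counitL' (L := fun q2 => f (s * p1 * S q2) (t * 1))); [lin | ].
rewrite (antipodeR' (L := fun r => f (s * r) (t * 1))) ?mulr1 //; first lin.
by move=> ? ?; rewrite mulrA.
Qed.

Lemma DS (W : lmodType F) (f : H -> H -> W) c : bilin f ->
  Sw (S c) f = Sw c (fun u v => f (S v) (S u)).
Proof.
move=> hf; have [hf1 hf2] := hf.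
rewrite -(counitR (L := fun t => Sw (S t) f)); last by lin.
pose M r q1 q2 := Sw r (fun al be => f (al * S q2) (be * S q1)).
transitivity (Sw c (fun c1 c2 => Sw c2 (fun p q => Sw q (fun q1 q2 => M (S c1 * p) q1 q2)))).
  apply: eq_Sw => c1 c2.
  rewrite -Sw_scale.
  transitivity (Sw (S c1) (fun s t => Sw c2 (fun p q => Sw p (fun p1 p2 =>
      Sw q (fun q1 q2 => f (s * p1 * S q2) (t * p2 * S q1)))))).
    by apply: eq_Sw => s t; rewrite Z1.
  rewrite Sw_swap; apply: eq_Sw => p q.
  transitivity (Sw (S c1) (fun s t => Sw q (fun q1 q2 => Sw p (fun p1 p2 =>
      f (s * p1 * S q2) (t * p2 * S q1))))).
    by apply: eq_Sw => s t; rewrite Sw_swap.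
  rewrite Sw_swap; apply: eq_Sw => q1 q2.
  rewrite /M Sw_mul //; bil.
rewrite -[Sw c _]/(Sw3 c (fun c1 p q => Sw q (fun q1 q2 => M (S c1 * p) q1 q2))).
rewrite -X21; last by split; introsH; rewrite /M; lin.
transitivity (Sw c (fun X q => eps X *: Sw q (fun q1 q2 => f (S q2) (S q1)))).
  apply: eq_Sw => X q; rewrite Sw_swap -Sw_scale; apply: eq_Sw => q1 q2.
  rewrite (antipodeL (L := fun r => M r q1 q2)); last by rewrite /M; lin.
  by rewrite /M Sw_one ?mul1r //; bil.
by rewrite (counitL (L := fun q => Sw q (fun q1 q2 => f (S q2) (S q1)))) //; lin.
Qed.

Hypothesis hc : cocommutative delta.

Lemma cocomm (W : lmodType F) a (f : H -> H -> W) : bilin f -> Sw a f = Sw a (fun x y => f y x).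
Proof. by move=> hf; rewrite /Sw (hc a hf) big_map. Qed.

Lemma swap34 (W : lmodType F) a (g : H -> H -> H -> H -> W) : ml4 g ->
  Sw4 a g = Sw4 a (fun x1 x2 x3 x4 => g x1 x2 x4 x3).
Proof.
case=> h1 h2 h3 h4; apply: eq_Sw3 => x y z; rewrite cocomm //; bil.
Qed.

Lemma swap23 (W : lmodType F) a (g : H -> H -> H -> H -> W) : ml4 g ->
  Sw4 a g = Sw4 a (fun x1 x2 x3 x4 => g x1 x3 x2 x4).
Proof.
move=> hg; have [h1 h2 h3 h4] := hg.
transitivity (Sw3 a (fun x y z => Sw y (fun u v => g x u v z))).
  by symmetry; apply: X32.
transitivity (Sw3 a (fun x y z => Sw y (fun u v => g x v u z))).
  by apply: eq_Sw3 => x y z; rewrite cocomm //; bil.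
by apply: (@X32 _ _ (fun x u v z => g x v u z)); split; introsH; lin.
Qed.

Lemma Sw_SwA (W : lmodType F) a (g : H -> H -> H) (f : H -> H -> W) : bilin f ->
  Sw (Sw a g) f = Sw a (fun x y => Sw (g x y) f).
Proof. by move=> hf; exact: (islin_sum _ _ _ (Sw_islin hf)). Qed.

Lemma f_Sw1 (W : lmodType F) (f : H -> H -> W) a (g : H -> H -> H) c :
  (forall y, islin (fun x => f x y)) -> f (Sw a g) c = Sw a (fun x y => f (g x y) c).
Proof. by move=> hf; exact: (islin_sum _ _ _ (hf c)). Qed.
Lemma f_Sw2 (W : lmodType F) (f : H -> H -> W) a (g : H -> H -> H) c :
  (forall x, islin (fun y => f x y)) -> f c (Sw a g) = Sw a (fun x y => f c (g x y)).
Proof. by move=> hf; exact: (islin_sum _ _ _ (hf c)). Qed.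

Variables (B1 B2 : H -> H).
Hypotheses (hB1 : coalg_hom delta eps B1) (hB2 : coalg_hom delta eps B2).
Let hB1l : islin B1. Proof. by case: hB1. Qed.
Let hB2l : islin B2. Proof. by case: hB2. Qed.

Definition circ a b := Sw a (fun x y => B1 x * b * S (B2 y)).
Definition sig a := Sw a (fun x y => B1 x * S (B2 y)).

Lemma delta_circ (W : lmodType F) (f : H -> H -> W) a b : bilin f ->
  Sw (circ a b) f = Sw a (fun x y => Sw b (fun u v => f (circ x u) (circ y v))).
Proof.
move=> hf; have [hf1 hf2] := hf.
rewrite /circ Sw_SwA //.
transitivity (Sw b (fun u v => Sw4 a (fun a1 a2 a3 a4 =>
    f (B1 a1 * u * S (B2 a4)) (B1 a2 * v * S (B2 a3))))).
  transitivity (Sw a (fun x y => Sw x (fun x1 x2 => Sw b (fun u v => Sw y (fun y1 y2 =>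
      f (B1 x1 * u * S (B2 y2)) (B1 x2 * v * S (B2 y1))))))).
    apply: eq_Sw => x y.
    rewrite Sw_mul; last bil.
    rewrite Sw_mul; last bil.
    rewrite Sw_hom //; last bil.
    apply: eq_Sw => x1 x2; apply: eq_Sw => u v.
    rewrite DS; last bil.
    by rewrite Sw_hom //; bil.
  transitivity (Sw b (fun u v => Sw a (fun x y => Sw x (fun x1 x2 => Sw y (fun y1 y2 =>
      f (B1 x1 * u * S (B2 y2)) (B1 x2 * v * S (B2 y1))))))).
    rewrite -Sw_swap; apply: eq_Sw => x y; exact: Sw_swap.
  apply: eq_Sw => u v.
  by apply: (@X21 _ _ (fun x1 x2 y => Sw y (fun y1 y2 =>
      f (B1 x1 * u * S (B2 y2)) (B1 x2 * v * S (B2 y1))))); split; introsH; lin.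
symmetry; rewrite Sw_swap; apply: eq_Sw => u v.
rewrite swap34; last by split; introsH; lin.
rewrite swap23; last by split; introsH; lin.
transitivity (Sw a (fun x y => Sw x (fun x1 x2 => Sw y (fun y1 y2 =>
      f (B1 x1 * u * S (B2 x2)) (B1 y1 * v * S (B2 y2)))))).
  apply: eq_Sw => x y; rewrite f_Sw1 //; apply: eq_Sw => x1 x2; rewrite f_Sw2 //.
by apply: (@X21 _ _ (fun x1 x2 y => Sw y (fun y1 y2 =>
      f (B1 x1 * u * S (B2 x2)) (B1 y1 * v * S (B2 y2))))); split; introsH; lin.
Qed.

Hypotheses (rb1 : forall a b, B1 a * B1 b = B1 (descendent delta S B1 B2 a b))
  (rb2 : forall a b, B2 a * B2 b = B2 (descendent delta S B1 B2 a b)).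

Lemma rb1' a b : B1 (circ a b) = B1 a * B1 b. Proof. by rewrite rb1. Qed.
Lemma rb2' a b : B2 (circ a b) = B2 a * B2 b. Proof. by rewrite rb2. Qed.

Lemma circ_assoc a b c : circ a (circ b c) = circ (circ a b) c.
Proof.
rewrite [RHS]/circ delta_circ; last bil.
apply: eq_Sw => x y; rewrite /circ -Sw_mull -Sw_mulr; apply: eq_Sw => u v.
by rewrite -/(circ x u) -/(circ y v) rb1' rb2' S_mul !mulrA.
Qed.

Lemma eps_circ a b : eps (circ a b) = eps a * eps b.
Proof.
rewrite eps_sum.
transitivity (\sum_(p <- delta a) eps (eps p.2 *: p.1) * eps b).
  apply: eq_bigr => p _; case: hB1 => _ _ e1; case: hB2 => _ _ e2.
  by rewrite !epsM eps_S e1 e2 eps_scale [LHS]mulrC mulrA.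
by rewrite -mulr_suml -eps_sum (hopf_counitr hh).
Qed.

Lemma sig_circ a : sig a = circ a 1.
Proof. by apply: eq_Sw => x y; rewrite mulr1. Qed.

Lemma sig_hom : coalg_hom delta eps sig.
Proof.
split.
- by rewrite /sig; lin.
- move=> a W f hf; have [hf1 hf2] := hf.
  rewrite big_map -/(Sw (sig a) f) sig_circ delta_circ //.
  transitivity (Sw a (fun x y => f (sig x) (sig y))); last by [].
  apply: eq_Sw => x y; rewrite (@Sw_one _ (fun u v => f (circ x u) (circ y v))).
    by rewrite -!sig_circ.
  by bil.
- by move=> a; rewrite sig_circ eps_circ eps1 mulr1.
Qed.

Lemma antipodeB (W : lmodType F) (B : H -> H) (L : H -> W) a : coalg_hom delta eps B -> islin L ->
  Sw a (fun x y => L (S (B x) * B y)) = eps a *: L 1.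
Proof.
move=> hB hL; have [_ _ eB] := hB.
rewrite -(@Sw_hom _ B a (fun s t => L (S s * t)) hB); last by bil.
by rewrite antipodeL // eB.
Qed.

Lemma K1 z : Sw z (fun p q => sig p * B2 q) = B1 z.
Proof.
transitivity (Sw z (fun p q => Sw p (fun u v => B1 u * S (B2 v) * B2 q))).
  by apply: eq_Sw => p q; rewrite /sig Sw_mulr.
rewrite (@X21 _ _ (fun u v q => B1 u * S (B2 v) * B2 q)); last by split; introsH; lin.
apply: (counitR' (L := B1)) => // u Y.
transitivity (eps Y *: (B1 u * 1)); last by rewrite mulr1.
rewrite -(@antipodeB _ B2 (fun t => B1 u * t) Y hB2) //; last by lin.
by apply: eq_Sw => v q; rewrite mulrA.
Qed.

Lemma K w : Sw w (fun y z => S (sig y) * B1 z) = B2 w.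
Proof.
have hsig := sig_hom; have [hsl _ _] := hsig.
transitivity (Sw w (fun y z => Sw z (fun p q => S (sig y) * sig p * B2 q))).
  by apply: eq_Sw => y z; rewrite -K1 -Sw_mull; apply: eq_Sw => p q; rewrite mulrA.
rewrite -[Sw w _]/(Sw3 w (fun y p q => S (sig y) * sig p * B2 q)).
rewrite -X21; last by split; introsH; lin.
apply: (counitL' (L := B2)) => // Y q.
transitivity (eps Y *: (1 * B2 q)); last by rewrite mul1r.
by rewrite -(@antipodeB _ sig (fun t => t * B2 q) Y hsig) //; lin.
Qed.

Lemma antipodeB' (W : lmodType F) (B : H -> H) (L : H -> W) a (g : H -> H -> W) :
  coalg_hom delta eps B -> islin L -> (forall x y, g x y = L (S (B x) * B y)) ->
  Sw a g = eps a *: L 1.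
Proof. by move=> hB hL e; rewrite -(antipodeB a hB hL); apply: eq_Sw. Qed.

Lemma Sw_linf' (W : lmodType F) (L : H -> W) a (f : H -> H -> H) (g : H -> H -> W) :
  islin L -> (forall x y, g x y = L (f x y)) -> Sw a g = L (Sw a f).
Proof. by move=> hL e; rewrite -Sw_linf //; apply: eq_Sw. Qed.

Lemma truss_eq' a b c :
  circ a (b * c) = \sum_(p <- delta3l delta a) circ p.1.1 b * S (sig p.1.2) * circ p.2 c.
Proof.
have hsig := sig_hom; have [hsl _ _] := hsig.
rewrite (@Sw3_delta3l _ a (fun x y z => circ x b * S (sig y) * circ z c)) X21; last by split; introsH; rewrite /circ; lin.
pose G x1 x2 y z1 z2 := B1 x1 * b * S (B2 x2) * S (sig y) * (B1 z1 * c * S (B2 z2)).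
transitivity (Sw5 a G); last first.
  rewrite -[Sw5 a G]/(Sw4 a (fun x1 x2 y z => Sw z (fun z1 z2 => G x1 x2 y z1 z2))).
  rewrite -X31; last by split; introsH; rewrite /G; lin.
  apply: eq_Sw3 => x y z; rewrite /circ -Sw_mulr -Sw_mulr; apply: eq_Sw => x1 x2.
  by rewrite -Sw_mull.
symmetry.
rewrite -X43; last by split; introsH; rewrite /G; lin.
transitivity (Sw4 a (fun x1 x2 w z2 => B1 x1 * b * S (B2 x2) * B2 w * c * S (B2 z2))).
  apply: eq_Sw4 => x1 x2 w z2.
  rewrite -(K w); apply: (Sw_linf' (L := fun t => B1 x1 * b * S (B2 x2) * t * c * S (B2 z2))).
    by lin.
  by move=> y z1; rewrite /G !mulrA.
rewrite -X32; last by split; introsH; lin.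
transitivity (Sw3 a (fun x1 v z2 => eps v *: (B1 x1 * b * c * S (B2 z2)))).
  apply: eq_Sw3 => x1 v z2.
  transitivity (eps v *: (B1 x1 * b * 1 * c * S (B2 z2))); last by rewrite mulr1.
  apply: (antipodeB' (L := fun t => B1 x1 * b * t * c * S (B2 z2)) _ hB2); first by lin.
  by move=> x2 w; rewrite !mulrA.
rewrite /circ /Sw3; apply: eq_Sw => x1 Y.
apply: (counitL' (L := fun z2 => B1 x1 * (b * c) * S (B2 z2))); first by lin.
by move=> v z2; rewrite !mulrA.
Qed.

Lemma truss : is_hopf_truss delta eps S (descendent delta S B1 B2) (rbs_cocycle delta S B1 B2).
Proof.
have -> : descendent delta S B1 B2 = circ by [].
have -> : rbs_cocycle delta S B1 B2 = sig by [].
split.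
- exact: hh.
- by apply: bilinP; introsH; rewrite /circ; lin.
- exact: circ_assoc.
- move=> a b W f hf; rewrite big_allpairs_dep /=; exact: delta_circ.
- exact: eps_circ.
- exact: sig_hom.
- exact: truss_eq'.
Qed.

End Sweedler.

Theorem mainTheorem7 (F : fieldType) (H : algType F)
  (delta : H -> seq (H * H)) (eps : H -> F) (S B1 B2 : H -> H) :
  [pchar F] =i pred0 ->
  is_RBsystem delta eps S B1 B2 ->
  is_hopf_truss delta eps S (descendent delta S B1 B2) (rbs_cocycle delta S B1 B2).
Proof.
move=> _ hR; case: hR => hh hc hB1 hB2 _ _ rb1 rb2.
by apply: truss.
Qed.
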